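(* Let $m\in\mathbb{Z}$ and let $h_1,h_2:\mathbb{Z}\to\mathbb{C}$ be functions decreasing sufficiently rapidly at infinity (so that all series below converge absolutely). Then $$\sum_{n\in\mathbb{Z}}\sum_{k=0}^{\infty}(-1)^n\,h_1\!\left(\frac{m+n+|n+m|}{2}+k\right)h_2\!\left(\frac{n-m-|n+m|}{2}-k\right)=\left(\sum_{k=0}^{\infty}(-1)^k h_1(k)\right)\left(\sum_{n=0}^{\infty}(-1)^{m+n}h_2(-m-n)\right).$$ *)

(* Defs.v *)
From Stdlib Require Import Reals ZArith.
From Coquelicot Require Export Coquelicot.
Open Scope R_scope.

Definition sgnZ (n : Z) : C := if Z.even n then RtoC 1 else RtoC (-1).

Definition rapid_decay (h : Z -> C) : Prop :=
  forall N : nat, exists c : R, forall x : Z,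
    Cmod (h x) * (1 + IZR (Z.abs x)) ^ N <= c.

Definition is_Zseries (f : Z -> C) (l : C) : Prop :=
  exists l1 l2 : C,
    is_series (fun n : nat => f (Z.of_nat n)) l1 /\
    is_series (fun n : nat => f (- (Z.of_nat n + 1))%Z) l2 /\
    l = Cplus l1 l2.

(* Main.v *)
Require Import Defs.
From Stdlib Require Import Reals ZArith Lia Lra.
From Coquelicot Require Import Coquelicot.
From Stdlib Require Import IndefiniteDescription.

Fixpoint P {G : AbelianMonoid} (a : nat -> G) (n : nat) : G :=
  match n with O => zero | S n => plus (P a n) (a n) end.

Lemma sum_n_P {G : AbelianMonoid} (a : nat -> G) n : sum_n a n = P a (S n).
Proof.
  induction n as [|n IH].
  - rewrite sum_O. simpl. now rewrite plus_zero_l.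
  - rewrite sum_Sn, IH. reflexivity.
Qed.

Lemma ser_P {K : AbsRing} {V : NormedModule K} (a : nat -> V) l :
  is_series a l <-> forall eps : posreal, exists N, forall n, (N <= n)%nat ->
     norm (minus (P a n) l) < eps.
Proof.
  unfold is_series. rewrite (@filterlim_locally_ball_norm K nat V eventually _ (sum_n a) l). split.
  - intros H eps. destruct (H eps) as [N HN]. exists (S N). intros n Hn.
    destruct n as [|n]; [lia|]. rewrite <- sum_n_P. apply HN. lia.
  - intros H eps. destruct (H eps) as [N HN]. exists N. intros n Hn.
    unfold ball_norm. rewrite sum_n_P. apply HN. lia.
Qed.

Lemma alg1 (G : AbelianGroup) (l p x : G) : plus (minus l (plus p x)) x = minus l p.
Proof. unfold minus. rewrite opp_plus, <- !plus_assoc, plus_opp_l, plus_zero_r. reflexivity. Qed.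

Lemma ser_tail {K : AbsRing} {V : NormedModule K} (a : nat -> V) l k :
  is_series a l -> is_series (fun d => a (d + k)%nat) (minus l (P a k)).
Proof.
  intros H. induction k as [|k IH].
  - assert (E: minus l (P a 0) = l) by exact (minus_zero_r l). rewrite E. eapply is_series_ext; [|exact H].
    intros n. now rewrite Nat.add_0_r.
  - simpl. apply is_series_ext with (a := fun d => a (S d + k)%nat).
    { intros n. f_equal. lia. }
    apply (is_series_incr_1 (fun d => a (d + k)%nat)).
    match goal with |- is_series _ ?L => replace L with (minus l (P a k)); [exact IH|] end.
    symmetry. exact (alg1 _ l (P a k) (a k)).
Qed.

Lemma ser_unique {K : AbsRing} {V : NormedModule K} (a : nat -> V) x y :
  is_series a x -> is_series a y -> x = y.
Proof.
  intros H1 H2. exact (filterlim_locally_unique _ x y H1 H2).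
Qed.

Lemma PC (a : nat -> C) n : @eq C (P a (S n)) (Cplus (P a n) (a n)).
Proof. reflexivity. Qed.
Lemma PC0 (a : nat -> C) : @eq C (P a 0) (RtoC 0).
Proof. reflexivity. Qed.

Lemma serC (a : nat -> C) l :
  is_series a l <-> forall eps : R, 0 < eps -> exists N, forall n, (N <= n)%nat ->
     Cmod (Cminus (P a n) l) < eps.
Proof.
  rewrite ser_P. split.
  - intros H eps He. exact (H (mkposreal eps He)).
  - intros H [eps He]. exact (H eps He).
Qed.

Lemma serR (a : nat -> R) l :
  is_series a l <-> forall eps : R, 0 < eps -> exists N, forall n, (N <= n)%nat ->
     Rabs (P a n - l) < eps.
Proof.
  rewrite ser_P. split.
  - intros H eps He. exact (H (mkposreal eps He)).
  - intros H [eps He]. exact (H eps He).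
Qed.

Lemma PR (a : nat -> R) n : @eq R (P a (S n)) (P a n + a n).
Proof. reflexivity. Qed.

Lemma P_normle (a : nat -> C) (b : nat -> R) n :
  (forall k, Cmod (a k) <= b k) -> Cmod (P a n) <= P b n.
Proof.
  intros H. induction n as [|n IH].
  - simpl. change (Cmod 0 <= 0). rewrite Cmod_0. lra.
  - rewrite PC, PR. eapply Rle_trans; [apply Cmod_triangle|]. specialize (H n). lra.
Qed.

Lemma Cmod_minus_le (x y : C) : Cmod (Cminus x y) <= Cmod x + Cmod y.
Proof. unfold Cminus. eapply Rle_trans; [apply Cmod_triangle|]. rewrite Cmod_opp. lra. Qed.

Lemma NB (a : nat -> C) (b : nat -> R) la lb :
  is_series a la -> is_series b lb -> (forall k, Cmod (a k) <= b k) -> Cmod la <= lb.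
Proof.
  intros Ha Hb H. rewrite serC in Ha. rewrite serR in Hb.
  apply Rle_plus_epsilon. intros eps He.
  assert (He2 : 0 < eps / 2) by lra.
  destruct (Ha _ He2) as [N1 H1]. destruct (Hb _ He2) as [N2 H2].
  specialize (H1 (N1 + N2)%nat ltac:(lia)). specialize (H2 (N1 + N2)%nat ltac:(lia)).
  pose proof (P_normle a b (N1 + N2) H).
  replace la with (Cminus (P a (N1+N2)) (Cminus (P a (N1+N2)) la)) by ring.
  eapply Rle_trans; [apply Cmod_minus_le|].
  apply Rabs_def2 in H2. lra.
Qed.

Lemma ex_le_C (a : nat -> C) (b : nat -> R) :
  (forall n, Cmod (a n) <= b n) -> ex_series b -> exists l, is_series a l.
Proof. intros. eapply (@ex_series_le C_AbsRing C_CompleteNormedModule); eauto. Qed.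
Lemma ser_zero : is_series (fun _ : nat => RtoC 0) (RtoC 0).
Proof.
  rewrite serC. intros eps He. exists O. intros n _.
  assert (E : @eq C (P (fun _ : nat => RtoC 0) n) (RtoC 0)).
  { induction n as [|n IH]; [reflexivity|]. rewrite PC, IH. ring. }
  rewrite E. replace (Cminus (RtoC 0) (RtoC 0)) with (RtoC 0) by ring. rewrite Cmod_0. lra.
Qed.

Lemma serC_plus (a b : nat -> C) la lb : is_series a la -> is_series b lb ->
  is_series (fun n => Cplus (a n) (b n)) (Cplus la lb).
Proof. intros. exact (is_series_plus a b la lb H H0). Qed.

Lemma serC_scal (c : C) (a : nat -> C) la : is_series a la ->
  is_series (fun n => Cmult c (a n)) (Cmult c la).
Proof. intros. exact (is_series_scal c a la H). Qed.

Lemma serC_scalr (c : C) (a : nat -> C) la : is_series a la ->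
  is_series (fun n => Cmult (a n) c) (Cmult la c).
Proof. intros H. rewrite Cmult_comm. eapply is_series_ext; [|apply (serC_scal c _ _ H)].
  intros n. apply Cmult_comm. Qed.

Lemma serC_opp (a : nat -> C) la : is_series a la ->
  is_series (fun n => Copp (a n)) (Copp la).
Proof. intros H. replace (Copp la) with (Cmult (Copp 1) la) by ring.
  eapply is_series_ext; [|apply (serC_scal _ _ _ H)]. intros n. simpl. ring. Qed.

Lemma serR_scal (c : R) (a : nat -> R) la : is_series a la ->
  is_series (fun n => c * a n) (c * la).
Proof. intros. exact (@is_series_scal R_AbsRing R_NormedModule c a la H). Qed.

Lemma serR_scalr (c : R) (a : nat -> R) la : is_series a la ->
  is_series (fun n => a n * c) (la * c).
Proof. intros H. rewrite Rmult_comm. eapply is_series_ext; [|apply (serR_scal c _ _ H)].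
  intros n. apply Rmult_comm. Qed.

Lemma Cmod_minus_sym (x y : C) : Cmod (Cminus x y) = Cmod (Cminus y x).
Proof. replace (Cminus x y) with (Copp (Cminus y x)) by ring. apply Cmod_opp. Qed.

Lemma P_nonneg (a : nat -> R) n : (forall k, 0 <= a k) -> 0 <= P a n.
Proof. intros H. induction n as [|n IH]; [simpl; apply Rle_refl|]. rewrite PR. specialize (H n). lra. Qed.

Lemma ser_nonneg (a : nat -> R) l : is_series a l -> (forall k, 0 <= a k) -> 0 <= l.
Proof.
  intros Hs H. destruct (Rle_or_lt 0 l) as [|Hl]; [assumption|].
  rewrite serR in Hs. destruct (Hs (- l) ltac:(lra)) as [N HN].
  specialize (HN N (le_n N)). pose proof (P_nonneg a N H). apply Rabs_def2 in HN. lra.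
Qed.

Lemma FUB (F : nat -> nat -> C) (al be : nat -> R) Sa Sb (Cc : nat -> C) L :
 (forall n, 0 <= al n) -> (forall k, 0 <= be k) -> is_series al Sa -> is_series be Sb ->
 (forall n k, Cmod (F n k) <= al n * be k) ->
 (forall k, is_series (fun n => F n k) (Cc k)) -> is_series Cc L ->
 exists Rr, (forall n, is_series (F n) (Rr n)) /\ is_series Rr L.
Proof.
  intros Hal Hbe Ha Hb HF HC HL.
  assert (Hrow : forall n, exists l, is_series (F n) l).
  { intros n. apply ex_le_C with (b := fun k => al n * be k); [apply HF|].
    exists (al n * Sb). apply serR_scal, Hb. }
  destruct (functional_choice _ Hrow) as [Rr HRr].
  exists Rr. split; [exact HRr|].
  assert (Hswap : forall M, is_series (fun k => P (fun n => F n k) M) (P Rr M)).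
  { induction M as [|M IH]; [exact ser_zero|].
    simpl. apply (serC_plus _ _ _ _ IH (HRr M)). }
  rewrite serC. intros eps He.
  set (c := Rabs Sb + 1).
  assert (Hc : 0 < c) by (unfold c; pose proof (Rabs_pos Sb); lra).
  rewrite serR in Ha. destruct (Ha (eps / c) ltac:(apply Rdiv_lt_0_compat; lra)) as [N HN].
  exists N. intros M HM. specialize (HN M HM).
  assert (Hcol : forall k, Cmod (Cminus (Cc k) (P (fun n => F n k) M)) <= be k * (Sa - P al M)).
  { intros k. apply NB with (a := fun d => F (d + M)%nat k) (b := fun d => al (d + M)%nat * be k).
    - exact (ser_tail (fun n => F n k) (Cc k) M (HC k)).
    - rewrite Rmult_comm. apply serR_scalr. exact (ser_tail al Sa M (proj2 (serR al Sa) Ha)).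
    - intros d. apply HF. }
  assert (Hser : is_series (fun k => Cminus (Cc k) (P (fun n => F n k) M)) (Cminus L (P Rr M))).
  { apply serC_plus; [exact HL|]. apply serC_opp, Hswap. }
  assert (Hbd := NB _ _ _ _ Hser (serR_scalr (Sa - P al M) _ _ Hb) Hcol).
  rewrite Cmod_minus_sym.
  apply Rabs_def2 in HN.
  assert (T0 : 0 <= Sa - P al M).
  {
    pose proof (ser_tail al Sa M (proj2 (serR al Sa) Ha)) as Ht.
    apply (ser_nonneg _ _ Ht). intros d; apply Hal. }
  eapply Rle_lt_trans; [exact Hbd|].
  assert (Sb * (Sa - P al M) <= c * (Sa - P al M)).
  { apply Rmult_le_compat_r; [lra|]. unfold c. pose proof (Rle_abs Sb). lra. }
  assert (c * (Sa - P al M) < c * (eps / c)) by (apply Rmult_lt_compat_l; lra).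
  replace (c * (eps / c)) with eps in * by (field; lra). lra.
Qed.

Lemma alg2 (G : AbelianGroup) (x y : G) : plus (minus x y) y = x.
Proof. unfold minus. rewrite <- plus_assoc, plus_opp_l, plus_zero_r. reflexivity. Qed.
Lemma alg3 (G : AbelianGroup) (x y : G) : plus (plus x y) (opp y) = x.
Proof. rewrite <- plus_assoc, plus_opp_r, plus_zero_r. reflexivity. Qed.

Lemma Zs_ext (g g' : Z -> C) l : (forall z, g z = g' z) -> is_Zseries g l -> is_Zseries g' l.
Proof.
  intros E [l1 [l2 [H1 [H2 Hl]]]]. exists l1, l2. split; [|split; [|exact Hl]].
  - eapply is_series_ext; [|exact H1]. intros n; apply E.
  - eapply is_series_ext; [|exact H2]. intros n; apply E.
Qed.

Lemma Zs_up (g : Z -> C) l : is_Zseries g l -> is_Zseries (fun s => g (s + 1)%Z) l.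
Proof.
  intros [l1 [l2 [H1 [H2 Hl]]]]. exists (Cminus l1 (g 0%Z)), (Cplus l2 (g 0%Z)).
  split; [|split].
  - apply is_series_ext with (a := fun n => g (Z.of_nat (S n))).
    { intros n. cbv beta. f_equal. lia. }
    apply (is_series_incr_1 (fun n => g (Z.of_nat n))).
    match goal with |- is_series _ ?L => replace L with l1; [exact H1|] end.
    symmetry. exact (alg2 _ l1 (g 0%Z)).
  - apply is_series_ext with (a := fun n => g (- Z.of_nat n)%Z).
    { intros n. cbv beta. f_equal. lia. }
    apply (is_series_decr_1 (fun n => g (- Z.of_nat n)%Z)).
    match goal with |- is_series _ ?L => replace L with l2 end.
    + eapply is_series_ext; [|exact H2]. intros n. cbv beta. f_equal. lia.
    + symmetry. exact (alg3 _ l2 (g 0%Z)).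
  - rewrite Hl. ring.
Qed.

Lemma Zs_down (g : Z -> C) l : is_Zseries g l -> is_Zseries (fun s => g (s - 1)%Z) l.
Proof.
  intros [l1 [l2 [H1 [H2 Hl]]]]. exists (Cplus l1 (g (-1)%Z)), (Cminus l2 (g (-1)%Z)).
  split; [|split].
  - apply (is_series_decr_1 (fun n => g (Z.of_nat n - 1)%Z)).
    match goal with |- is_series _ ?L => replace L with l1 end.
    + eapply is_series_ext; [|exact H1]. intros n. cbv beta. f_equal. lia.
    + symmetry. exact (alg3 _ l1 (g (-1)%Z)).
  - apply is_series_ext with (a := fun n => g (- (Z.of_nat (S n) + 1))%Z).
    { intros n. cbv beta. f_equal. lia. }
    apply (is_series_incr_1 (fun n => g (- (Z.of_nat n + 1))%Z)).
    match goal with |- is_series _ ?L => replace L with l2; [exact H2|] end.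
    symmetry. exact (alg2 _ l2 (g (-1)%Z)).
  - rewrite Hl. ring.
Qed.

Lemma Zs_shift_nat (g : Z -> C) l p : is_Zseries g l ->
  is_Zseries (fun s => g (s + Z.of_nat p)%Z) l /\ is_Zseries (fun s => g (s - Z.of_nat p)%Z) l.
Proof.
  intros H. induction p as [|p [IH1 IH2]].
  - split; (eapply Zs_ext; [|exact H]); intros z; cbv beta; f_equal; lia.
  - split.
    + eapply Zs_ext; [|exact (Zs_up _ _ IH1)]. intros z. cbv beta. f_equal. lia.
    + eapply Zs_ext; [|exact (Zs_down _ _ IH2)]. intros z. cbv beta. f_equal. lia.
Qed.

Lemma Zs_shift (g : Z -> C) l m : is_Zseries g l -> is_Zseries (fun s => g (s + m)%Z) l.
Proof.
  intros H. destruct (Z_le_gt_dec 0 m) as [Hm|Hm].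
  - eapply Zs_ext; [|exact (proj1 (Zs_shift_nat g l (Z.to_nat m) H))].
    intros z. cbv beta. f_equal. lia.
  - eapply Zs_ext; [|exact (proj2 (Zs_shift_nat g l (Z.to_nat (- m)) H))].
    intros z. cbv beta. f_equal. lia.
Qed.

Lemma Abel (a b : nat -> C) A B : is_series a A -> is_series b B ->
  is_series (fun k => Cplus (Cmult (Cminus A (P a k)) (b k)) (Cmult (a k) (Cminus B (P b (S k))))) (Cmult A B).
Proof.
  intros Ha Hb.
  set (f := fun k => Cplus (Cmult (Cminus A (P a k)) (b k)) (Cmult (a k) (Cminus B (P b (S k))))).
  assert (E : forall M, @eq C (P f M) (Cminus (Cmult A B) (Cmult (Cminus A (P a M)) (Cminus B (P b M))))).
  { induction M as [|M IH].
    - rewrite !PC0. ring.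
    - rewrite !PC, IH. unfold f. rewrite PC. ring. }
  rewrite serC in Ha, Hb |- *. intros eps He.
  destruct (Ha 1 Rlt_0_1) as [N1 H1]. destruct (Hb eps He) as [N2 H2].
  exists (N1 + N2)%nat. intros n Hn.
  specialize (H1 n ltac:(lia)). specialize (H2 n ltac:(lia)).
  rewrite E. replace (Cminus (Cminus (Cmult A B) (Cmult (Cminus A (P a n)) (Cminus B (P b n)))) (Cmult A B))
    with (Cmult (Cminus (P a n) A) (Cminus B (P b n))) by ring.
  rewrite Cmod_mult. rewrite (Cmod_minus_sym B).
  pose proof (Cmod_ge_0 (Cminus (P b n) B)).
  pose proof (Cmod_ge_0 (Cminus (P a n) A)). nra.
Qed.

Lemma sgn_mul p q : Cmult (sgnZ p) (sgnZ q) = sgnZ (p + q).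
Proof.
  unfold sgnZ. rewrite Z.even_add.
  destruct (Z.even p), (Z.even q); simpl; apply injective_projections; simpl; ring.
Qed.

Lemma sgn_eq x y j : x = (y + 2 * j)%Z -> sgnZ x = sgnZ y.
Proof.
  intros ->. unfold sgnZ. rewrite Z.even_add, Z.even_mul. simpl.
  destruct (Z.even y); reflexivity.
Qed.

Lemma Cmod_sgn z : Cmod (sgnZ z) = 1.
Proof. unfold sgnZ. destruct (Z.even z); rewrite Cmod_R; [apply Rabs_R1|].
  rewrite Rabs_left by lra. lra. Qed.

Definition w (n : nat) : R := / ((INR n + 1) ^ 2).

Lemma w_pos n : 0 < w n.
Proof. unfold w. apply Rinv_0_lt_compat. pose proof (pos_INR n). apply pow_lt. lra. Qed.

Lemma w_ser : exists Sw, is_series w Sw.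
Proof.
  set (t := fun n : nat => / (INR n + 1) - / (INR n + 2)).
  assert (Pt : forall n, @eq R (P t n) (1 - / (INR n + 1))).
  { induction n as [|n IH].
    - change (P t 0) with 0. simpl. field.
    - rewrite PR, IH. unfold t. rewrite S_INR. pose proof (pos_INR n). field. lra. }
  assert (Ht : is_series t 1).
  { rewrite serR. intros eps He. destruct (archimed_cor1 eps He) as [N [HN HN0]].
    exists N. intros n Hn. rewrite Pt.
    replace (1 - / (INR n + 1) - 1) with (- / (INR n + 1)) by ring.
    rewrite Rabs_Ropp. pose proof (pos_INR n).
    rewrite Rabs_pos_eq by (apply Rlt_le, Rinv_0_lt_compat; lra).
    eapply Rle_lt_trans; [|exact HN].
    apply Rinv_le_contravar. { apply lt_0_INR. lia. }
    apply le_INR in Hn. lra. }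
  assert (Hex : ex_series w).
  { apply (@ex_series_le R_AbsRing R_CompleteNormedModule) with (b := fun n => 2 * t n).
    - intros n. change (norm (w n)) with (Rabs (w n)).
      rewrite Rabs_pos_eq by (apply Rlt_le, w_pos).
      unfold w, t. pose proof (pos_INR n).
      replace (2 * (/ (INR n + 1) - / (INR n + 2))) with (2 / ((INR n + 1) * (INR n + 2))) by (field; lra).
      replace (/ (INR n + 1) ^ 2) with (1 / ((INR n + 1) * (INR n + 1))) by (field; lra).
      apply Rmult_le_reg_r with ((INR n + 1) * (INR n + 1) * (INR n + 2)).
      { apply Rmult_lt_0_compat; [apply Rmult_lt_0_compat|]; lra. }
      field_simplify; try lra. 
    - exists (2 * 1). apply serR_scal, Ht. }
  destruct Hex as [Sw HSw]. exists Sw. exact HSw.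
Qed.

Definition Dec (x : nat -> C) (c : R) := 0 <= c /\ forall n, Cmod (x n) * (INR n + 1) ^ 4 <= c.

Lemma dec_bound x c n d k : Dec x c -> (d + k <= n)%nat -> Cmod (x n) <= c * (w d * w k).
Proof.
  intros [Hc H] Hn. specialize (H n).
  pose proof (pos_INR d) as Hd. pose proof (pos_INR k) as Hk.
  apply le_INR in Hn. rewrite plus_INR in Hn.
  set (q := (INR d + 1) ^ 2 * (INR k + 1) ^ 2).
  assert (Hq : 0 < q) by (unfold q; apply Rmult_lt_0_compat; apply pow_lt; lra).
  assert (E : w d * w k = / q) by (unfold w, q; field; lra).
  rewrite E.
  assert (Hq4 : q <= (INR n + 1) ^ 4).
  { unfold q. replace ((INR n + 1) ^ 4) with (((INR n + 1) ^ 2) ^ 2) by ring.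
    rewrite <- Rpow_mult_distr. apply pow_incr. split.
    - apply Rmult_le_pos; lra.
    - nra. }
  pose proof (Cmod_ge_0 (x n)).
  apply Rmult_le_reg_r with q; [exact Hq|].
  replace (c * / q * q) with c by (field; lra).
  eapply Rle_trans; [|exact H]. apply Rmult_le_compat_l; assumption.
Qed.

Lemma dec_bound0 x c n : Dec x c -> Cmod (x n) <= c.
Proof.
  intros [Hc H]. specialize (H n). pose proof (pos_INR n).
  pose proof (Cmod_ge_0 (x n)).
  assert (1 <= (INR n + 1) ^ 4).
  { replace 1 with (1 ^ 4) by ring. apply pow_incr. lra. }
  nra.
Qed.

Lemma Cmod_sgn_mul z x : Cmod (Cmult (sgnZ z) x) = Cmod x.
Proof. rewrite Cmod_mult, Cmod_sgn. ring. Qed.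

Lemma dec_a (h1 : Z -> C) : rapid_decay h1 ->
  exists c, Dec (fun i => Cmult (sgnZ (Z.of_nat i)) (h1 (Z.of_nat i))) c.
Proof.
  intros H. destruct (H 4%nat) as [c Hc]. exists c. split.
  - specialize (Hc 0%Z). pose proof (Cmod_ge_0 (h1 0%Z)).
    assert (0 <= (1 + IZR (Z.abs 0)) ^ 4) by (apply pow_le; simpl; lra). nra.
  - intros n. rewrite Cmod_sgn_mul. specialize (Hc (Z.of_nat n)).
    rewrite Z.abs_eq in Hc by lia. rewrite <- INR_IZR_INZ in Hc.
    replace (INR n + 1) with (1 + INR n) by ring. exact Hc.
Qed.

Lemma dec_b (m : Z) (h2 : Z -> C) : rapid_decay h2 ->
  exists c, Dec (fun j => Cmult (sgnZ (m + Z.of_nat j)) (h2 (- m - Z.of_nat j)%Z)) c.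
Proof.
  intros H. destruct (H 4%nat) as [c Hc].
  assert (c0 : 0 <= c).
  { specialize (Hc 0%Z). pose proof (Cmod_ge_0 (h2 0%Z)).
    assert (0 <= (1 + IZR (Z.abs 0)) ^ 4) by (apply pow_le; simpl; lra). nra. }
  set (M := 1 + IZR (Z.abs m)).
  assert (HM : 1 <= M) by (unfold M; pose proof (IZR_le 0 _ (Z.abs_nonneg m)); lra).
  exists (M ^ 4 * c). split.
  - apply Rmult_le_pos; [apply pow_le; lra | exact c0].
  - intros n. rewrite Cmod_sgn_mul. set (y := (- m - Z.of_nat n)%Z). specialize (Hc y).
    assert (Hy : 0 <= IZR (Z.abs y)) by (apply IZR_le; lia).
    assert (Hn : INR n + 1 <= M * (1 + IZR (Z.abs y))).
    { rewrite INR_IZR_INZ. unfold M.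
      assert (IZR (Z.of_nat n) <= IZR (Z.abs m) + IZR (Z.abs y)).
      { rewrite <- plus_IZR. apply IZR_le. unfold y. lia. }
      pose proof (IZR_le 0 _ (Z.abs_nonneg m)). nra. }
    pose proof (Cmod_ge_0 (h2 y)).
    assert ((INR n + 1) ^ 4 <= M ^ 4 * (1 + IZR (Z.abs y)) ^ 4).
    { rewrite <- Rpow_mult_distr. apply pow_incr. pose proof (pos_INR n). lra. }
    assert (0 <= M ^ 4) by (apply pow_le; lra).
    eapply Rle_trans. { apply Rmult_le_compat_l; [lra|]. exact H1. }
    nra.
Qed.

Definition tt (m : Z) (h1 h2 : Z -> C) (n : Z) (k : nat) : C :=
  Cmult (sgnZ n)
    (Cmult (h1 ((m + n + Z.abs (n + m)) / 2 + Z.of_nat k)%Z)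
           (h2 ((n - m - Z.abs (n + m)) / 2 - Z.of_nat k)%Z)).

Lemma T1 m h1 h2 d k :
  tt m h1 h2 (Z.of_nat d - m)%Z k =
  Cmult (Cmult (sgnZ (Z.of_nat (d + k))) (h1 (Z.of_nat (d + k))))
        (Cmult (sgnZ (m + Z.of_nat k)) (h2 (- m - Z.of_nat k)%Z)).
Proof.
  unfold tt.
  assert (E1 : ((m + (Z.of_nat d - m) + Z.abs (Z.of_nat d - m + m)) / 2 + Z.of_nat k)%Z = Z.of_nat (d + k)).
  { replace (m + (Z.of_nat d - m) + Z.abs (Z.of_nat d - m + m))%Z with (Z.of_nat d * 2)%Z by lia.
    rewrite Z.div_mul by lia. lia. }
  assert (E2 : ((Z.of_nat d - m - m - Z.abs (Z.of_nat d - m + m)) / 2 - Z.of_nat k)%Z = (- m - Z.of_nat k)%Z).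
  { replace (Z.of_nat d - m - m - Z.abs (Z.of_nat d - m + m))%Z with ((- m) * 2)%Z by lia.
    rewrite Z.div_mul by lia. lia. }
  rewrite E1, E2.
  rewrite (sgn_eq (Z.of_nat d - m) (Z.of_nat (d + k) + (m + Z.of_nat k)) (- m - Z.of_nat k)) by lia.
  rewrite <- sgn_mul. ring.
Qed.

Lemma T2 m h1 h2 d k :
  tt m h1 h2 (- (Z.of_nat d + 1) - m)%Z k =
  Cmult (Cmult (sgnZ (Z.of_nat k)) (h1 (Z.of_nat k)))
        (Cmult (sgnZ (m + Z.of_nat (d + S k))) (h2 (- m - Z.of_nat (d + S k))%Z)).
Proof.
  unfold tt.
  set (n := (- (Z.of_nat d + 1) - m)%Z).
  assert (E1 : ((m + n + Z.abs (n + m)) / 2 + Z.of_nat k)%Z = Z.of_nat k).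
  { replace (m + n + Z.abs (n + m))%Z with (0 * 2)%Z by (unfold n; lia).
    rewrite Z.div_mul by lia. lia. }
  assert (E2 : ((n - m - Z.abs (n + m)) / 2 - Z.of_nat k)%Z = (- m - Z.of_nat (d + S k))%Z).
  { replace (n - m - Z.abs (n + m))%Z with ((- (Z.of_nat d + 1) - m) * 2)%Z by (unfold n; lia).
    rewrite Z.div_mul by lia. lia. }
  rewrite E1, E2.
  rewrite (sgn_eq n (Z.of_nat k + (m + Z.of_nat (d + S k))) (- m - Z.of_nat d - Z.of_nat k - 1)) by (unfold n; lia).
  rewrite <- sgn_mul. ring.
Qed.

Theorem lemma2 (m : Z) (h1 h2 : Z -> C)
  (H1 : rapid_decay h1) (H2 : rapid_decay h2) :
  exists (I : Z -> C) (A B : C),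
    (forall n : Z, is_series (fun k : nat =>
        Cmult (sgnZ n)
          (Cmult (h1 ((m + n + Z.abs (n + m)) / 2 + Z.of_nat k)%Z)
                 (h2 ((n - m - Z.abs (n + m)) / 2 - Z.of_nat k)%Z))) (I n)) /\
    is_Zseries I (Cmult A B) /\
    is_series (fun k : nat => Cmult (sgnZ (Z.of_nat k)) (h1 (Z.of_nat k))) A /\
    is_series (fun n : nat =>
        Cmult (sgnZ (m + Z.of_nat n)%Z) (h2 (- m - Z.of_nat n)%Z)) B.
Proof.
  set (a := fun i : nat => Cmult (sgnZ (Z.of_nat i)) (h1 (Z.of_nat i))).
  set (b := fun j : nat => Cmult (sgnZ (m + Z.of_nat j)) (h2 (- m - Z.of_nat j)%Z)).
  destruct (dec_a h1 H1) as [ca Da]. fold a in Da.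
  destruct (dec_b m h2 H2) as [cb Db]. fold b in Db.
  destruct w_ser as [Sw HSw].
  assert (ca0 : 0 <= ca) by apply Da. assert (cb0 : 0 <= cb) by apply Db.
  assert (wp : forall n, 0 <= w n) by (intros; apply Rlt_le, w_pos).
  assert (HA : exists A, is_series a A).
  { apply ex_le_C with (b := fun n => (ca * w 0) * w n).
    - intros n. eapply Rle_trans; [apply (dec_bound a ca n n 0 Da); lia|]. right. ring.
    - exists (ca * w 0 * Sw). apply serR_scal, HSw. }
  assert (HB : exists B, is_series b B).
  { apply ex_le_C with (b := fun n => (cb * w 0) * w n).
    - intros n. eapply Rle_trans; [apply (dec_bound b cb n n 0 Db); lia|]. right. ring.
    - exists (cb * w 0 * Sw). apply serR_scal, HSw. }
  destruct HA as [A HA]. destruct HB as [B HB].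
  set (F1 := fun d k => Cmult (a (d + k)%nat) (b k)).
  set (al := fun d => ca * cb * w d).
  assert (Hal : forall d, 0 <= al d) by (intros; unfold al; apply Rmult_le_pos; [apply Rmult_le_pos|]; auto).
  assert (Has : is_series al (ca * cb * Sw)) by (apply serR_scal, HSw).
  assert (D1 : forall d k, Cmod (F1 d k) <= al d * w k).
  { intros d k. unfold F1, al. rewrite Cmod_mult.
    pose proof (dec_bound a ca (d + k) d k Da (le_n _)).
    pose proof (dec_bound0 b cb k Db).
    eapply Rle_trans. { apply Rmult_le_compat; try apply Cmod_ge_0; eassumption. }
    right. ring. }
  set (Cc1 := fun k => Cmult (Cminus A (P a k)) (b k)).
  assert (HC1 : forall k, is_series (fun d => F1 d k) (Cc1 k)).
  { intros k. unfold F1, Cc1. apply serC_scalr. exact (ser_tail a A k HA). }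
  assert (HL1 : exists L1, is_series Cc1 L1).
  { apply ex_le_C with (b := fun k => (ca * cb * Sw) * w k).
    - intros k. apply (NB _ _ _ _ (HC1 k) (serR_scalr (w k) _ _ Has)). intros d. apply D1.
    - exists (ca * cb * Sw * Sw). apply serR_scal, HSw. }
  destruct HL1 as [L1 HL1].
  destruct (FUB F1 al w _ _ Cc1 L1 Hal wp Has HSw D1 HC1 HL1) as [R1 [HR1 HR1s]].
  set (F2 := fun d k => Cmult (a k) (b (d + S k)%nat)).
  set (al2 := fun d => cb * ca * w d).
  assert (Hal2 : forall d, 0 <= al2 d) by (intros; unfold al2; apply Rmult_le_pos; [apply Rmult_le_pos|]; auto).
  assert (Has2 : is_series al2 (cb * ca * Sw)) by (apply serR_scal, HSw).
  assert (D2 : forall d k, Cmod (F2 d k) <= al2 d * w k).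
  { intros d k. unfold F2, al2. rewrite Cmod_mult.
    pose proof (dec_bound b cb (d + S k) d k Db ltac:(lia)).
    pose proof (dec_bound0 a ca k Da).
    eapply Rle_trans. { apply Rmult_le_compat; try apply Cmod_ge_0; eassumption. }
    right. ring. }
  set (Cc2 := fun k => Cmult (a k) (Cminus B (P b (S k)))).
  assert (HC2 : forall k, is_series (fun d => F2 d k) (Cc2 k)).
  { intros k. unfold F2, Cc2. apply serC_scal. exact (ser_tail b B (S k) HB). }
  assert (HL2 : exists L2, is_series Cc2 L2).
  { apply ex_le_C with (b := fun k => (cb * ca * Sw) * w k).
    - intros k. apply (NB _ _ _ _ (HC2 k) (serR_scalr (w k) _ _ Has2)). intros d. apply D2.
    - exists (cb * ca * Sw * Sw). apply serR_scal, HSw. }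
  destruct HL2 as [L2 HL2].
  destruct (FUB F2 al2 w _ _ Cc2 L2 Hal2 wp Has2 HSw D2 HC2 HL2) as [R2 [HR2 HR2s]].
  assert (HLAB : Cplus L1 L2 = Cmult A B).
  { apply (ser_unique (fun k => Cplus (Cc1 k) (Cc2 k))).
    - exact (serC_plus _ _ _ _ HL1 HL2).
    - exact (Abel a b A B HA HB). }
  set (I := fun n : Z => if Z_le_gt_dec 0 (n + m) then R1 (Z.to_nat (n + m))
                          else R2 (Z.to_nat (- (n + m)) - 1)%nat).
  exists I, A, B. split; [|split; [|split; [exact HA|exact HB]]].
  - intros n. change (is_series (tt m h1 h2 n) (I n)). unfold I.
    destruct (Z_le_gt_dec 0 (n + m)) as [Hn|Hn].
    + eapply is_series_ext; [|exact (HR1 (Z.to_nat (n + m)))].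
      intros k. set (d := Z.to_nat (n + m)). assert (En : n = (Z.of_nat d - m)%Z) by lia.
      clearbody d. subst n. rewrite T1. reflexivity.
    + eapply is_series_ext; [|exact (HR2 (Z.to_nat (- (n + m)) - 1)%nat)].
      intros k. set (d := (Z.to_nat (- (n + m)) - 1)%nat).
      assert (En : n = (- (Z.of_nat d + 1) - m)%Z) by lia.
      clearbody d. subst n. rewrite T2. reflexivity.
  - rewrite <- HLAB.
    assert (HZ : is_Zseries (fun s => I (s - m)%Z) (Cplus L1 L2)).
    { exists L1, L2. split; [|split; [|reflexivity]].
      - eapply is_series_ext; [|exact HR1s]. intros d. unfold I.
        destruct (Z_le_gt_dec 0 (Z.of_nat d - m + m)) as [Hd|Hd]; [|lia].
        f_equal. lia.
      - eapply is_series_ext; [|exact HR2s]. intros d. unfold I.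
        destruct (Z_le_gt_dec 0 (- (Z.of_nat d + 1) - m + m)) as [Hd|Hd]; [lia|].
        f_equal. lia. }
    eapply Zs_ext; [|exact (Zs_shift _ _ m HZ)]. intros z. cbv beta. f_equal. lia.
Qed.
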